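(* For every path $P$ on at least $4$ vertices, $4\le\pi_T(P)\le 5$.
   Context: A sequence is nonrepetitive if no block of consecutive terms has the form $r_1\dots r_nr_1\dots r_n$ with $n\ge1$. A (strong) total Thue colouring of a graph $G$ is a colouring of $V(G)\cup E(G)$ such that for every path $v_1,e_1,v_2,\dots,e_{k-1},v_k$ in $G$ the sequence of colours of $v_1,e_1,\dots,v_k$ is nonrepetitive, the sequence of colours of $v_1,\dots,v_k$ is nonrepetitive, and the sequence of colours of $e_1,\dots,e_{k-1}$ is nonrepetitive. $\pi_T(G)$ is the minimum number of colours in a total Thue colouring of $G$. *)

(* Defs.v *)
From mathcomp Require Import all_boot.
Set Implicit Arguments. Unset Strict Implicit. Unset Printing Implicit Defensive.

Definition nonrepetitive (s : seq nat) : Prop :=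
  forall i m : nat, 0 < m -> i + 2 * m <= size s ->
    take m (drop i s) <> take m (drop (i + m) s).

Definition simple_graph (T : finType) (adj : rel T) : Prop :=
  symmetric adj /\ irreflexive adj.

Definition is_gpath (T : finType) (adj : rel T) (x : T) (p : seq T) : Prop :=
  path adj x p /\ uniq (x :: p).

Fixpoint total_seq (T : finType) (cv : T -> nat) (ce : T -> T -> nat)
    (x : T) (p : seq T) : seq nat :=
  cv x :: (if p is y :: p' then ce x y :: total_seq cv ce y p' else [::]).

Definition total_thue_colouring (T : finType) (adj : rel T) (k : nat)
    (cv : T -> nat) (ce : T -> T -> nat) : Prop :=
  (forall v, cv v < k) /\
  (forall u v, adj u v -> ce u v < k) /\
  (forall u v, adj u v -> ce u v = ce v u) /\
  (forall x p, is_gpath adj x p ->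
     [/\ nonrepetitive (total_seq cv ce x p),
         nonrepetitive (map cv (x :: p)) &
         nonrepetitive (pairmap ce x p)]).

Definition total_thue_colourable (T : finType) (adj : rel T) (k : nat) : Prop :=
  exists cv ce, total_thue_colouring adj k cv ce.

Definition is_piT (T : finType) (adj : rel T) (k : nat) : Prop :=
  total_thue_colourable adj k /\ forall j, j < k -> ~ total_thue_colourable adj j.

Arguments is_piT : clear implicits.
Definition path_adj (n : nat) : rel 'I_n :=
  fun i j => (i.+1 == j :> nat) || (j.+1 == i :> nat).
Arguments path_adj : clear implicits.

(* Main.v *)
Require Import Defs.
From mathcomp Require Import all_boot.
From mathcomp Require Import zify.
Set Implicit Arguments. Unset Strict Implicit.

Fixpoint tmf (f n : nat) : bool :=
  if f is f'.+1 then (if n == 0 then false else (n %% 2 == 1) (+) tmf f' (n %/ 2)) else false.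
Definition tm n := tmf n n.

Lemma tmf_stable f g n : n <= f -> n <= g -> tmf f n = tmf g n.
Proof.
elim: f g n => [|f IH] [|g] n /=; try (case: n => //; lia).
case: eqP => // hn Hf Hg.
rewrite (IH g) //; lia.
Qed.

Lemma tm_rec n : 0 < n -> tm n = (n %% 2 == 1) (+) tm (n %/ 2).
Proof.
case: n => // n _. rewrite {1}/tm /=. congr (_ (+) _).
rewrite /tm; apply: tmf_stable; lia.
Qed.

Lemma tm_even k : tm (2*k) = tm k.
Proof.
case: k => // k. rewrite tm_rec; last lia.
have -> : ((2 * k.+1) %% 2 == 1) = false by lia.
by have -> : 2 * k.+1 %/ 2 = k.+1 by lia.
Qed.

Lemma tm_odd k : tm (2*k+1) = ~~ tm k.
Proof.
rewrite tm_rec; last lia.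
have -> : ((2 * k + 1) %% 2 == 1) = true by lia.
by have -> : (2 * k + 1) %/ 2 = k by lia.
Qed.

Lemma par2 p : (exists k, p = 2*k) \/ (exists k, p = 2*k+1).
Proof. case: (boolP (p %% 2 == 0)) => h; [left|right]; exists (p %/ 2); lia. Qed.

Lemma block k : tm (2*k) != tm (2*k+1).
Proof. by rewrite tm_even tm_odd; case: (tm k). Qed.

Lemma tmE x y : x = y -> tm x = tm y.
Proof. by move->. Qed.

Lemma no_aaa k : tm k = tm k.+1 -> tm k.+1 = tm k.+2 -> False.
Proof.
case: (par2 k) => [[h ->]|[h ->]] e1 e2.
- move: (block h). by rewrite e1 (tmE (_:(2*h).+1 = 2*h+1)) ?eqxx //; lia.
- move: (block h.+1). rewrite (tmE (_ : 2*h.+1 = (2*h+1).+1)); last lia.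
  rewrite (tmE (_ : 2*h.+1+1 = (2*h+1).+2)); last lia.
  by rewrite e2 eqxx.
Qed.

Lemma no_alt5 q : (forall r, r < 4 -> tm (q+r) != tm (q+r).+1) -> False.
Proof.
move=> H.
have H2 : forall r, r < 3 -> tm (q+r) = tm (q+r).+2.
  move=> r hr. have := H r (ltnW hr). have := H r.+1 hr. rewrite !addnS.
  by case: (tm (q+r)); case: (tm (q+r).+1); case: (tm (q+r).+2).
case: (par2 q) => [[h eq]|[h eq]]; subst q.
- apply: (@no_aaa h).
  + have := H2 0 isT. rewrite addn0 tm_even.
    by rewrite (tmE (_ : (2*h).+2 = 2*h.+1)) ?tm_even //; lia.
  + have := H2 2 isT. rewrite (tmE (_ : 2*h+2 = 2*h.+1)); last lia.
    rewrite (tmE (_ : (2*h+2).+2 = 2*h.+2)); last lia.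
    by rewrite !tm_even.
- apply: (@no_aaa h).
  + have := H 0 isT. rewrite addn0 tm_odd.
    rewrite (tmE (_ : (2*h+1).+1 = 2*h.+1)); last lia.
    by rewrite tm_even; case: (tm h); case: (tm h.+1).
  + have := H2 1 isT. rewrite (tmE (_ : 2*h+1+1 = 2*h.+1)); last lia.
    rewrite (tmE (_ : (2*h+1+1).+2 = 2*h.+2)); last lia.
    by rewrite !tm_even.
Qed.

Lemma overlap_free m : forall i, 0 < m -> (forall j, j <= m -> tm (i+j) = tm (i+m+j)) -> False.
Proof.
elim/ltn_ind: m => m IH i m0 H.
have Hk : forall j x y, j <= m -> x = i+j -> y = i+m+j -> tm x = tm y.
  by move=> j x y hj -> ->; exact: H.
case: (par2 m) => [[m' em]|[m' em]].
- have m'0 : 0 < m' by lia.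
  have lt : m' < m by lia.
  case: (par2 i) => [[c ei]|[c ei]].
  + apply: (IH m' lt c m'0) => l hl.
    rewrite -(tm_even (c+l)) -(tm_even (c+m'+l)). apply: (Hk (2*l)); lia.
  + apply: (IH m' lt c m'0) => l hl. apply: negb_inj. rewrite -!tm_odd.
    apply: (Hk (2*l)); lia.
- case: (m' =P 0) => [m0'|mn0].
  + apply: (@no_aaa i).
    * apply: (Hk 0); lia.
    * apply: (Hk 1); lia.
  + apply: (@no_alt5 i) => r hr.
    pose p := i + r. have hp0 : p = i + r := erefl. rewrite -/p. clearbody p.
    case: (par2 p) => [[h ep]|[h ep]].
    * rewrite ep (tmE (_ : (2*h).+1 = 2*h+1)); last lia. exact: block.
    * case: (leqP (p.+1) (i+m)) => hp.
      -- rewrite (Hk (p-i) p (2*(h+m'+1))); try lia.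
         rewrite (Hk (p-i).+1 p.+1 (2*(h+m'+1)+1)); try lia. exact: block.
      -- rewrite -(Hk (p-m-i) (2*(h-m')) p); try lia.
         rewrite -(Hk (p-m-i).+1 (2*(h-m')+1) p.+1); try lia. exact: block.
Qed.

Definition V (a b : bool) : nat :=
  match a, b with true, true => 0 | false, true => 1 | false, false => 2 | true, false => 3 end.
Definition cn k := V (tm k) (tm k.+1).
Definition en k := (cn k + 1) %% 4.
Definition S k := if k %% 2 == 0 then cn (k %/ 2) else en (k %/ 2).

Lemma S_even x : S (2*x) = cn x.
Proof. rewrite /S. have -> : (2*x %% 2 == 0) = true by lia. by have -> : 2*x %/ 2 = x by lia. Qed.
Lemma S_odd x : S (2*x+1) = en x.
Proof. rewrite /S. have -> : ((2*x+1) %% 2 == 0) = false by lia. by have -> : (2*x+1) %/ 2 = x by lia. Qed.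
Lemma SE x y : x = y -> S x = S y. Proof. by move->. Qed.
Lemma cnE x y : x = y -> cn x = cn y. Proof. by move->. Qed.

Definition sf (f : nat -> nat) := forall p m, 0 < m -> (forall j, j < m -> f (p+j) = f (p+m+j)) -> False.

Lemma V_inj a b c d : V a b = V c d -> a = c /\ b = d.
Proof. by case: a; case: b; case: c; case: d. Qed.

Lemma cn_lt4 x : cn x < 4.
Proof. rewrite /cn; by case: (tm x); case: (tm x.+1). Qed.

Lemma cn_sf : sf cn.
Proof.
move=> p m m0 H. apply: (overlap_free (i:=p) m0) => j hj.
case: (ltnP j m) => hjm.
- by case: (V_inj (H j hjm)).
- have hj' : m.-1 < m by lia.
  case: (V_inj (H _ hj')) => _.
  by rewrite (tmE (_ : (p + m.-1).+1 = p + j)) ?(tmE (_ : (p + m + m.-1).+1 = p + m + j)); try lia.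
Qed.

Lemma en_sf : sf en.
Proof.
move=> p m m0 H. apply: (cn_sf (p:=p) m0) => j hj. have := H j hj. rewrite /en.
have := cn_lt4 (p+j). have := cn_lt4 (p+m+j). lia.
Qed.

Definition par x := tm x != tm x.+1.
Lemma odd_cn x : odd (cn x) = par x.
Proof. rewrite /cn /par; by case: (tm x); case: (tm x.+1). Qed.
Lemma odd_en x : odd (en x) = ~~ par x.
Proof. rewrite /en /cn /par; by case: (tm x); case: (tm x.+1). Qed.

Lemma S_sf : sf S.
Proof.
move=> p m m0 H.
have Hx : forall q, p <= q -> q < p + m -> S q = S (q + m).
  move=> q h1 h2. have := H (q - p) _. rewrite (SE (_ : p + (q-p) = q)); last lia.
  rewrite (SE (_ : p + m + (q-p) = q + m)); last lia. apply; lia.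
case: (par2 m) => [[l em]|[l em]].
- have l0 : 0 < l by lia.
  case: (par2 p) => [[a ep]|[a ep]].
  + apply: (cn_sf (p:=a) l0) => j hj. rewrite -!S_even.
    rewrite (SE (_ : 2*(a+j) = p + 2*j)); last lia.
    rewrite (SE (_ : 2*(a+l+j) = p + m + 2*j)); last lia. apply: H; lia.
  + apply: (en_sf (p:=a) l0) => j hj. rewrite -!S_odd.
    rewrite (SE (_ : 2*(a+j)+1 = p + 2*j)); last lia.
    rewrite (SE (_ : 2*(a+l+j)+1 = p + m + 2*j)); last lia. apply: H; lia.
- have E : forall y, p <= 2*y -> 2*y < p + m -> par y = ~~ par (y+l).
    move=> y h1 h2. have := Hx _ h1 h2. rewrite S_even.
    rewrite (SE (_ : 2*y + m = 2*(y+l)+1)); last lia. rewrite S_odd.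
    by move=> e; rewrite -odd_cn e odd_en.
  have O : forall y, p <= 2*y+1 -> 2*y+1 < p + m -> ~~ par y = par (y+l+1).
    move=> y h1 h2. have := Hx _ h1 h2. rewrite S_odd.
    rewrite (SE (_ : 2*y+1 + m = 2*(y+l+1))); last lia. rewrite S_even.
    by move=> e; rewrite -odd_en e odd_cn.
  case: (par2 p) => [[a ep]|[a ep]].
  + have C : forall k, k <= l -> par (a+k) = par a.
      elim=> [|k IHk] hk; first by rewrite addn0.
      rewrite -(IHk (ltnW hk)).
      rewrite (E (a+k.+1)); try lia.
      rewrite (_ : a + k.+1 + l = a + k + l + 1); last lia.
      rewrite -(O (a+k)) ?negbK //; lia.
    have e : par a = ~~ par (a+l) by apply: E; lia.
    by move: e; rewrite -(C l (leqnn l)); case: (par (a+l)).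
  + case: (l =P 0) => [l0|ln0].
    * have := H 0 m0. rewrite addn0 (SE (_ : p = 2*a+1)) // S_odd.
      rewrite (SE (_ : p + m + 0 = 2*(a.+1))); last lia. rewrite S_even /en /cn.
      by case: (tm a); case: (tm a.+1); case: (tm a.+2).
    * have C1 : forall k, k <= l -> par (a+k) = par a.
        elim=> [|k IHk] hk; first by rewrite addn0.
        rewrite -(IHk (ltnW hk)).
        rewrite (E (a+k.+1)); try lia.
        rewrite (_ : a + k.+1 + l = a + k + l + 1); last lia.
        rewrite -(O (a+k)) ?negbK //; lia.
      have C2 : par (a+l+1) = par (a+l+2).
        have e1 : par (a+1) = ~~ par (a+l+1).
          rewrite (_ : a+l+1 = a+1+l); [apply: E; lia | lia].
        have e2 : ~~ par (a+1) = par (a+l+2).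
          rewrite (_ : a+l+2 = a+1+l+1); [apply: O; lia | lia].
        by rewrite -e2 e1 negbK.
      have O0 := O a.
      have Hp1 := C1 1.
      have aaa : forall z, par z = false -> par z.+1 = false -> False.
        move=> z; rewrite /par => /negbFE/eqP e1 /negbFE/eqP e2. exact: (no_aaa e1 e2).
      case ha : (par a).
      -- apply: (aaa (a+l+1)).
         ++ by rewrite -O0 ?ha //; lia.
         ++ rewrite (_ : (a+l+1).+1 = a+l+2); last lia.
            rewrite -C2 -O0 ?ha //; lia.
      -- apply: (aaa a) => //. by rewrite -addn1 Hp1 //; lia.
Qed.


Lemma nonrep_nth s : (forall i m, 0 < m -> i + 2*m <= size s ->
   (forall j, j < m -> nth 0 s (i+j) = nth 0 s (i+m+j)) -> False) -> nonrepetitive s.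
Proof.
move=> H i m m0 hs E. apply: (H i m m0 hs) => j hj.
have := congr1 (fun t => nth 0 t j) E. by rewrite /= !nth_take // !nth_drop.
Qed.

Lemma nonrep_inc s f a : sf f -> (forall k, k < size s -> nth 0 s k = f (a+k)) -> nonrepetitive s.
Proof.
move=> hf hn. apply: nonrep_nth => i m m0 hs E. apply: (hf (a+i) m m0) => j hj.
have := E j hj. rewrite hn; last lia. rewrite hn; last lia. 
rewrite (_ : a + (i+j) = a+i+j); last lia. rewrite (_ : a + (i+m+j) = a+i+m+j); last lia. done.
Qed.

Lemma nonrep_dec s f C : sf f -> size s <= C.+1 ->
  (forall k, k < size s -> nth 0 s k = f (C-k)) -> nonrepetitive s.
Proof.
move=> hf hC hn. apply: nonrep_nth => i m m0 hs E.
apply: (hf (C - (i + 2*m - 1)) m m0) => j hj.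
have := E (m - 1 - j) _. rewrite hn; last lia. rewrite hn; last lia.
rewrite (_ : C - (i + (m-1-j)) = C - (i + 2*m - 1) + m + j); last lia.
rewrite (_ : C - (i + m + (m-1-j)) = C - (i + 2*m - 1) + j); last lia.
move=> e. symmetry. apply: e. lia.
Qed.

Lemma size_total (T : finType) (cv : T -> nat) ce x p :
  size (total_seq cv ce x p) = (2 * size p).+1.
Proof. elim: p x => [|y p IH] x //=. rewrite IH. lia. Qed.

Definition cvP {n : nat} (v : 'I_n) := cn v.
Definition ceP {n : nat} (u v : 'I_n) := en (minn u v).

Lemma inc_seqs {n : nat} (x : 'I_n) p : path (fun u v : 'I_n => (v : nat) == u.+1) x p ->
 [/\ forall k, k <= size p -> nth 0 (map cvP (x::p)) k = cn (x + k),
     forall k, k < size p -> nth 0 (pairmap ceP x p) k = en (x + k) &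
     forall k, k <= 2 * size p -> nth 0 (total_seq cvP ceP x p) k = S (2*x + k)].
Proof.
elim: p x => [|y p IH] x /=.
- move=> _; split => // k hk.
  + by rewrite (_ : k = 0) ?addn0 //; lia.
  + by rewrite (_ : k = 0) ?addn0 ?S_even //; lia.
- move=> /andP [/eqP hy hp]. case: (IH y hp) => h1 h2 h3. split.
  + case=> [|k] hk /=; first by rewrite addn0.
    rewrite h1; last lia. by rewrite hy (_ : x.+1 + k = x + k.+1) //; lia.
  + case=> [|k] hk /=; first by rewrite /ceP hy addn0 (_ : minn x x.+1 = x) //; lia.
    rewrite h2; last lia. by rewrite hy (_ : x.+1 + k = x + k.+1) //; lia.
  + case=> [|[|k]] hk /=.
    * by rewrite addn0 S_even.
    * by rewrite /ceP hy (_ : minn x x.+1 = x) ?S_odd //; lia.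
    * rewrite h3; last lia. by rewrite hy (SE (_ : 2 * x.+1 + k = 2*x + k.+2)) //; lia.
Qed.

Lemma dec_seqs {n : nat} (x : 'I_n) p : path (fun u v : 'I_n => (u : nat) == v.+1) x p ->
 [/\ size p <= x, forall k, k <= size p -> nth 0 (map cvP (x::p)) k = cn (x - k),
     forall k, k < size p -> nth 0 (pairmap ceP x p) k = en (x - 1 - k) &
     forall k, k <= 2 * size p -> nth 0 (total_seq cvP ceP x p) k = S (2*x - k)].
Proof.
elim: p x => [|y p IH] x /=.
- move=> _; split => // k hk.
  + have -> : k = 0 by lia. by rewrite subn0.
  + have -> : k = 0 by lia. by rewrite subn0 S_even.
- move=> /andP [/eqP hy hp]. case: (IH y hp) => h0 h1 h2 h3. split.
  + lia.
  + case=> [|k] hk /=; first by rewrite subn0.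
    rewrite h1; last lia. apply: cnE. lia.
  + have mi : minn x y = y by lia.
    case=> [|k] hk /=.
    * rewrite /ceP mi. congr en. lia.
    * rewrite h2; last lia. congr en. lia.
  + have mi : minn x y = y by lia.
    case=> [|[|k]] hk /=.
    * by rewrite subn0 S_even.
    * rewrite /ceP mi -S_odd. apply: SE. lia.
    * rewrite h3; last lia. apply: SE. lia.
Qed.

Lemma path_dir {n : nat} (x : 'I_n) p : is_gpath (path_adj n) x p ->
  path (fun u v : 'I_n => (v : nat) == u.+1) x p \/ path (fun u v : 'I_n => (u : nat) == v.+1) x p.
Proof.
elim: p x => [|y p IH] x; first by left.
case=> /= /andP [hxy hp] hu.
move: hu => /= /andP [hx hu].
have [hi|hd] := IH y (conj hp hu).
- case: p hp hi hx {IH hu} => [|z p] hp hi hx.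
  + move: hxy; rewrite /path_adj => /orP [/eqP e|/eqP e]; [left|right];
      apply/andP; split => //; apply/eqP; exact: esym e.
  + move: (hi) => /= /andP [/eqP hz _]. move: hxy; rewrite /path_adj => /orP [/eqP e|/eqP e].
    * left. apply/andP; split; last exact: hi. apply/eqP; exact: esym e.
    * exfalso. have xz : x = z by apply: ord_inj; lia.
      by move: hx; rewrite xz !inE eqxx orbT.
- case: p hp hd hx {IH hu} => [|z p] hp hd hx.
  + move: hxy; rewrite /path_adj => /orP [/eqP e|/eqP e]; [left|right];
      apply/andP; split => //; apply/eqP; exact: esym e.
  + move: (hd) => /= /andP [/eqP hz hzp]. move: hxy; rewrite /path_adj => /orP [/eqP e|/eqP e].
    * exfalso. have xz : x = z by apply: ord_inj; lia.
      by move: hx; rewrite xz !inE eqxx orbT.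
    * right. apply/andP; split; last exact: hd. apply/eqP; exact: esym e.
Qed.

Lemma colouring4 (n : nat) : total_thue_colouring (path_adj n) 4 cvP ceP.
Proof.
split; [|split; [|split]].
- move=> v; exact: cn_lt4.
- move=> u v _; rewrite /ceP /en; lia.
- by move=> u v _; rewrite /ceP minnC.
- move=> x p hp. case: (path_dir hp) => [hi|hd].
  + case: (inc_seqs hi) => h1 h2 h3. split.
    * apply: (nonrep_inc (f:=S) (a:=2*x) S_sf) => k hk. apply: h3.
      by move: hk; rewrite size_total.
    * apply: (nonrep_inc (f:=cn) (a:=x) cn_sf) => k hk. apply: h1. by move: hk; rewrite size_map.
    * apply: (nonrep_inc (f:=en) (a:=x) en_sf) => k hk. apply: h2. by move: hk; rewrite size_pairmap.
  + case: (dec_seqs hd) => h0 h1 h2 h3. split.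
    * apply: (nonrep_dec (f:=S) (C:=2*x) S_sf).
        rewrite size_total ltnS leq_mul2l /=; exact: h0.
      move=> k hk. apply: h3. by move: hk; rewrite size_total.
    * apply: (nonrep_dec (f:=cn) (C:=x) cn_sf); first by rewrite size_map /=.
      move=> k hk. apply: h1. by move: hk; rewrite size_map.
    * apply: (nonrep_dec (f:=en) (C:=x-1) en_sf); first by rewrite size_pairmap; apply: (leq_trans h0); lia.
      move=> k hk. rewrite h2; last by move: hk; rewrite size_pairmap.
      congr en; lia.
Qed.


Definition nrb (s : seq nat) : bool :=
  all (fun i => all (fun m => ~~ [&& 0 < m, i + 2*m <= size s &
        take m (drop i s) == take m (drop (i+m) s)]) (iota 0 (size s).+1)) (iota 0 (size s).+1).

Lemma nonrep_nrb s : nonrepetitive s -> nrb s.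
Proof.
move=> H. apply/allP => i _; apply/allP => m _; apply/negP => /and3P [m0 hs /eqP E].
exact: (H i m m0 hs E).
Qed.

Definition r3 := iota 0 3.
Definition check7 :=
  all (fun a => all (fun b => all (fun c => all (fun d => all (fun e => all (fun f => all (fun g =>
   ~~ [&& nrb [:: a;e;b;f;c;g;d], nrb [:: a;b;c;d] & nrb [:: e;f;g]]) r3) r3) r3) r3) r3) r3) r3.

Lemma check7_ok : check7 = true.
Proof. vm_compute. reflexivity. Qed.

Lemma in3 a : a < 3 -> a \in r3.
Proof. by rewrite mem_iota. Qed.

Lemma check7_spec a b c d e f g : a < 3 -> b < 3 -> c < 3 -> d < 3 -> e < 3 -> f < 3 -> g < 3 ->
  nrb [:: a;e;b;f;c;g;d] -> nrb [:: a;b;c;d] -> nrb [:: e;f;g] -> False.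
Proof.
move=> ha hb hc hd he hf hg n1 n2 n3.
have := check7_ok. rewrite /check7.
move=> /allP/(_ a (in3 ha)) /allP/(_ b (in3 hb)) /allP/(_ c (in3 hc)) /allP/(_ d (in3 hd)).
move=> /allP/(_ e (in3 he)) /allP/(_ f (in3 hf)) /allP/(_ g (in3 hg)).
by rewrite n1 n2 n3.
Qed.

Lemma no3 n (H4 : 4 <= n) j cv ce : j <= 3 -> total_thue_colouring (path_adj n) j cv ce -> False.
Proof.
move=> hj [hv [he [hs hp]]].
have h0 : 0 < n by lia. have h1 : 1 < n by lia. have h2 : 2 < n by lia. have h3 : 3 < n by lia.
pose o0 := Ordinal h0. pose o1 := Ordinal h1. pose o2 := Ordinal h2. pose o3 := Ordinal h3.
have G : is_gpath (path_adj n) o0 [:: o1; o2; o3] by split.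
have [t1 t2 t3] := hp o0 [:: o1; o2; o3] G.
have lt : forall x, x < j -> x < 3 by move=> x hx; lia.
apply: (@check7_spec (cv o0) (cv o1) (cv o2) (cv o3) (ce o0 o1) (ce o1 o2) (ce o2 o3)).
- apply: lt; exact: hv.
- apply: lt; exact: hv.
- apply: lt; exact: hv.
- apply: lt; exact: hv.
- apply: lt; exact: he.
- apply: lt; exact: he.
- apply: lt; exact: he.
- exact: nonrep_nrb t1.
- exact: nonrep_nrb t2.
- exact: nonrep_nrb t3.
Qed.

Theorem theorem14 (n : nat) : 4 <= n ->
  exists k, is_piT 'I_n (path_adj n) k /\ 4 <= k <= 5.
Proof.
move=> H4. exists 4. split => //. split.
- exists (@cvP n), (@ceP n). exact: colouring4.
- move=> j hj [cv [ce C]]. apply: (no3 H4 _ C). lia.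
Qed.
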